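(* Let $\sigma$ and $\tau$ be matchings and let $n\in\mathbb{N}$ with $n\geq|\sigma|$. Then $$|\mathcal{M}_{n}(\sigma(\tau+|\sigma|))|=|\mathcal{M}_{n}(\sigma)|+\sum_{\ell=|\sigma|}^{n}\sum_{k=0}^{n-\ell}\binom{2\ell+k-1}{k}\binom{2n-2\ell-k}{k}\,k!\,|\mu_{\ell}(\sigma)|\,|\mathcal{M}_{n-\ell-k}(\tau)|.$$
   Context: A matching of order $n$ is a partition of $[2n]=\{1,\dots,2n\}$ into blocks (edges) of size two; it is identified with the unique word $w\in[n]^{2n}$ in which the two vertices of each edge carry the same letter and the letters of edges appear in increasing order of their left (smaller) vertices (e.g. $1212$ is $\{\{1,3\},\{2,4\}\}$). $|\sigma|$ denotes the order (number of edges) of $\sigma$. A matching $\sigma$ of order $k$ is a pattern of $\tau$ (written $\sigma\le\tau$, ''$\tau$ contains $\sigma$'') if there are $i_1<\dots<i_{2k}$ in $[2|\tau|]$ with $\{i_p,i_q\}\in\tau$ iff $\{p,q\}\in\sigma$; otherwise $\tau$ avoids $\sigma$. $\mathcal{M}_n(S)$ is the set of matchings of order $n$ avoiding every pattern in $S$ ($\mathcal{M}_0(S)$ contains only the empty matching). For matchings $\sigma,\tau$, $\sigma(\tau+|\sigma|)$ is the juxtaposition: the word of $\sigma$ followed by the word of $\tau$ with $|\sigma|$ added to each letter. The rightmost edge of a matching is the edge with the largest right vertex. A matching $\lambda$ minimally contains $\sigma$ if it contains $\sigma$ and the matching obtained from $\lambda$ by deleting its rightmost edge does not contain $\sigma$;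 $\mu_\ell(\sigma)$ is the set of matchings of order $\ell$ minimally containing $\sigma$. *)

(* Defs.v *)
From mathcomp Require Import all_boot.
Set Implicit Arguments. Unset Strict Implicit. Unset Printing Implicit Defensive.

(* A matching of order n is represented as a fixed-point-free involution on
   the 2n positions {0,...,2n-1} (position i stands for vertex i+1 of [2n]):
   f i is the partner of i.  This is in bijection with the canonical words. *)
Definition mfun (n : nat) := {ffun 'I_(n.*2) -> 'I_(n.*2)}.

Definition is_matching (n : nat) (f : mfun n) : bool :=
  [forall i, (f (f i) == i) && (f i != i)].

Definition contains (k m : nat) (s : mfun k) (t : mfun m) : bool :=
  [exists e : {ffun 'I_(k.*2) -> 'I_(m.*2)},
    [forall p : 'I_(k.*2), forall q : 'I_(k.*2),
      ((p < q) ==> (e p < e q)) && ((t (e p) == e q) == (s p == q))]].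

(* nat extension of a finite function (identity outside the domain) *)
Definition natf (N : nat) (f : {ffun 'I_N -> 'I_N}) (x : nat) : nat :=
  oapp (fun i : 'I_N => val (f i)) x (insub x).

(* build a finite function from a nat function (values out of range: junk) *)
Definition mkf (N : nat) (g : nat -> nat) : {ffun 'I_N -> 'I_N} :=
  [ffun i : 'I_N => insubd i (g i)].

Definition juxt (a b : nat) (s : mfun a) (t : mfun b) : mfun (a + b) :=
  mkf _ (fun x => if x < a.*2 then natf s x else a.*2 + natf t (x - a.*2)).

(* deletion of the rightmost edge {f L, L}, L = 2n-1 the last position,
   followed by standardization; a matching of order n.-1 (junk if n = 0) *)
Definition del_last (n : nat) (f : mfun n) : mfun n.-1 :=
  let r := natf f (n.*2).-1 in
  mkf _ (fun x => unbump r (natf f (bump r x))).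

Definition Mset (n k : nat) (s : mfun k) : {set mfun n} :=
  [set f : mfun n | is_matching f && ~~ contains s f].

(* mu_l(sigma): matchings of order l minimally containing sigma.  For l = 0
   there is no rightmost edge; the empty matching is taken to minimally
   contain sigma iff it contains sigma. *)
Definition mu (l k : nat) (s : mfun k) : {set mfun l} :=
  [set f : mfun l | [&& is_matching f, contains s f &
                        ((l == 0) || ~~ contains s (del_last f))]].

(* Main.v *)
Require Import Defs.
From mathcomp Require Import all_boot fingroup perm zify.
From Stdlib Require Import Classical.
Set Implicit Arguments. Unset Strict Implicit. Unset Printing Implicit Defensive.

Lemma natf_val N (f : {ffun 'I_N -> 'I_N}) (i : 'I_N) : natf f i = f i.
Proof. by rewrite /natf valK. Qed.

Lemma natf_lt N (f : {ffun 'I_N -> 'I_N}) x : x < N -> natf f x < N.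
Proof. by move=> lx; rewrite /natf insubT /=. Qed.

Lemma natf_ge N (f : {ffun 'I_N -> 'I_N}) x : N <= x -> natf f x = x.
Proof. by move=> lx; rewrite /natf insubF //= ltnNge lx. Qed.

Lemma natf_mkf N g x : x < N -> g x < N -> natf (mkf N g) x = g x.
Proof. by move=> lx lg; rewrite /natf insubT /= /mkf ffunE /= /insubd insubT. Qed.

Lemma natf_inj N (f g : {ffun 'I_N -> 'I_N}) :
  (forall x, x < N -> natf f x = natf g x) -> f = g.
Proof.
move=> h; apply/ffunP => i; apply/val_inj => /=.
by rewrite -!natf_val h.
Qed.

Definition nmatch N (F : nat -> nat) :=
  forall x, x < N -> [/\ F x < N, F (F x) = x & F x <> x].

Lemma matchingP n (f : mfun n) : reflect (nmatch n.*2 (natf f)) (is_matching f).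
Proof.
apply: (iffP forallP) => [h x lx | h i].
  have := h (Ordinal lx); case/andP => /eqP e1 /eqP e2.
  have -> : natf f x = f (Ordinal lx) by rewrite -natf_val.
  split; first by [].
  - by rewrite natf_val e1.
  - by move=> e; apply: e2; apply: val_inj.
have [_ h2 h3] := h _ (ltn_ord i).
apply/andP; split; apply/eqP.
  by apply: val_inj; rewrite /= -!natf_val.
by move=> e; apply: h3; rewrite natf_val e.
Qed.

Definition emb K M (S T : nat -> nat) (e : nat -> nat) :=
 [/\ forall p, p < K -> e p < M,
     forall p q, p < q -> q < K -> e p < e q &
     forall p q, p < K -> q < K -> (T (e p) = e q <-> S p = q)].

Lemma containsP k m (s : mfun k) (t : mfun m) :
  reflect (exists e, emb k.*2 m.*2 (natf s) (natf t) e) (contains s t).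
Proof.
apply: (iffP existsP) => [[e /forallP he] | [e [h1 h2 h3]]].
  pose e' p := oapp (fun i : 'I_(k.*2) => val (e i)) 0 (insub p).
  have e'E (i : 'I_(k.*2)) : e' i = e i by rewrite /e' valK.
  exists e'; split.
  - by move=> p lp; rewrite (_ : p = Ordinal lp) // e'E.
  - move=> p q lpq lq; have lp := ltn_trans lpq lq.
    rewrite (_ : p = Ordinal lp) // (_ : q = Ordinal lq) // !e'E.
    by have /forallP/(_ (Ordinal lq))/andP[/implyP H _] := he (Ordinal lp); apply: H.
  - move=> p q lp lq.
    rewrite (_ : p = Ordinal lp) // (_ : q = Ordinal lq) // !e'E.
    have /forallP/(_ (Ordinal lq))/andP[_ /eqP H] := he (Ordinal lp).
    rewrite natf_val natf_val.
    split.
    + move=> E; have : (t (e (Ordinal lp)) == e (Ordinal lq)) by apply/eqP/val_inj.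
      by rewrite H => /eqP ->.
    + move=> E; have : (s (Ordinal lp) == Ordinal lq) by apply/eqP/val_inj.
      by rewrite -H => /eqP ->.
exists [ffun p : 'I_(k.*2) => Ordinal (h1 _ (ltn_ord p))].
apply/forallP => p; apply/forallP => q; rewrite !ffunE /=.
apply/andP; split; first by apply/implyP => lpq; apply: h2.
have := h3 p q (ltn_ord p) (ltn_ord q).
set o := Ordinal _.
have Eo : e p = val o by [].
rewrite Eo => H.
apply/eqP; apply/idP/idP => /eqP E; apply/eqP/val_inj => /=.
  by rewrite -natf_val; apply/H; rewrite natf_val E.
by rewrite -natf_val; apply/H; rewrite natf_val E.
Qed.

Definition embP K M S T (P : nat -> Prop) :=
  exists e, emb K M S T e /\ forall p, p < K -> P (e p).

Lemma embP_mono K M S T (P Q : nat -> Prop) :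
  (forall x, P x -> Q x) -> embP K M S T P -> embP K M S T Q.
Proof. by move=> h [e [he hp]]; exists e; split=> // p /hp /h. Qed.

Lemma emb_ext K M S S' T T' e :
  (forall p, p < K -> S p = S' p) -> (forall x, x < M -> T x = T' x) ->
  emb K M S T e -> emb K M S' T' e.
Proof.
move=> hS hT [h1 h2 h3]; split=> // p q lp lq.
by rewrite -hT ?h1 // -hS //; apply: h3.
Qed.

Lemma embP_ext K M S S' T T' P :
  (forall p, p < K -> S p = S' p) -> (forall x, x < M -> T x = T' x) ->
  embP K M S T P -> embP K M S' T' P.
Proof. by move=> hS hT [e [he hp]]; exists e; split=> //; apply: emb_ext he. Qed.

Definition res (F : nat -> nat) (X : seq nat) (i : nat) := index (F (nth 0 X i)) X.

Lemma sorted_uniq_ltn (X : seq nat) : sorted ltn X -> uniq X.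
Proof. by apply: sorted_uniq; [apply: ltn_trans | apply: ltnn]. Qed.

Lemma nth_lt_sorted (X : seq nat) i j :
  sorted ltn X -> i < j -> j < size X -> nth 0 X i < nth 0 X j.
Proof.
move=> sX lij ljs; apply: (sorted_ltn_nth ltn_trans) => //.
by rewrite inE (ltn_trans lij).
Qed.

Lemma index_lt_sorted (X : seq nat) x y :
  sorted ltn X -> x \in X -> y \in X -> x < y -> index x X < index y X.
Proof.
move=> sX xX yX lxy; rewrite ltnNge; apply/negP => h.
rewrite leq_eqVlt in h; case/orP: h => [/eqP e | h].
  by move: lxy; rewrite -(nth_index 0 xX) -(nth_index 0 yX) e ltnn.
have := nth_lt_sorted sX h; rewrite index_mem => /(_ xX).
by rewrite !nth_index // => /(ltn_trans lxy); rewrite ltnn.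
Qed.

Lemma K2 (F : nat -> nat) (X : seq nat) M K S (P : nat -> Prop) :
  sorted ltn X -> (forall x, x \in X -> x < M) ->
  (forall x, x \in X -> F x \in X) ->
  embP K (size X) S (res F X) P <->
  embP K M S F (fun x => x \in X /\ P (index x X)).
Proof.
move=> sX XM XF; have uX := sorted_uniq_ltn sX.
split=> [[e [[h1 h2 h3] hp]] | [e [[h1 h2 h3] hp]]].
  exists (fun p => nth 0 X (e p)); split; last first.
    by move=> p lp; rewrite mem_nth ?h1 // index_uniq ?h1 //; split=> //; apply: hp.
  split.
  - by move=> p lp; apply: XM; rewrite mem_nth ?h1.
  - by move=> p q lpq lq; apply: nth_lt_sorted => //; [apply: h2 | apply: h1].
  - move=> p q lp lq; rewrite -h3 // /res.
    have FX : F (nth 0 X (e p)) \in X by apply: XF; rewrite mem_nth ?h1.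
    split=> [-> | <-]; first by rewrite index_uniq ?h1.
    by rewrite nth_index.
exists (fun p => index (e p) X); split; last by move=> p /hp [].
split.
- by move=> p lp; rewrite index_mem; case: (hp p lp).
- move=> p q lpq lq; have lp := ltn_trans lpq lq.
  apply: index_lt_sorted => //; [by case: (hp p lp) | by case: (hp q lq) | exact: h2].
- move=> p q lp lq; rewrite -h3 // /res.
  have [ep _] := hp p lp; have [eq _] := hp q lq.
  rewrite nth_index //; split=> [E | ->] //.
  by rewrite -(nth_index 0 eq) -E nth_index // XF.
Qed.

Section Lists.
Variables (N : nat) (F : nat -> nat).
Hypothesis HF : nmatch N F.

Definition pre c := [seq i <- iota 0 c | F i < c].
Definition opl c := [seq i <- iota 0 c | c <= F i].
Definition suf c := [seq i <- iota c (N - c) | c <= F i].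
Definition opr c := [seq i <- iota c (N - c) | F i < c].

Lemma mem_pre c x : (x \in pre c) = (x < c) && (F x < c).
Proof. by rewrite mem_filter mem_iota /= andbC. Qed.
Lemma mem_opl c x : (x \in opl c) = (x < c) && (c <= F x).
Proof. by rewrite mem_filter mem_iota /= andbC. Qed.
Lemma mem_suf c x : c <= N -> (x \in suf c) = [&& c <= x, x < N & c <= F x].
Proof. by move=> cN; rewrite mem_filter mem_iota subnKC // andbC andbA. Qed.
Lemma mem_opr c x : c <= N -> (x \in opr c) = [&& c <= x, x < N & F x < c].
Proof. by move=> cN; rewrite mem_filter mem_iota subnKC // andbC andbA. Qed.

Lemma sorted_pre c : sorted ltn (pre c).
Proof. exact/sorted_filter/iota_ltn_sorted/ltn_trans. Qed.
Lemma sorted_opl c : sorted ltn (opl c).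
Proof. exact/sorted_filter/iota_ltn_sorted/ltn_trans. Qed.
Lemma sorted_suf c : sorted ltn (suf c).
Proof. exact/sorted_filter/iota_ltn_sorted/ltn_trans. Qed.
Lemma sorted_opr c : sorted ltn (opr c).
Proof. exact/sorted_filter/iota_ltn_sorted/ltn_trans. Qed.

Lemma size_pre_opl c : size (pre c) + size (opl c) = c.
Proof.
rewrite !size_filter -[c in RHS](size_iota 0) -(count_predC (fun i => F i < c)).
by congr (_ + _); apply: eq_count => i /=; rewrite -leqNgt.
Qed.

Lemma size_suf_opr c : size (suf c) + size (opr c) = N - c.
Proof.
rewrite !size_filter -[N - c in RHS](size_iota c) -(count_predC (fun i => c <= F i)).
by congr (_ + _); apply: eq_count => i /=; rewrite ltnNge.
Qed.

Lemma pre_closed c x : c <= N -> x \in pre c -> F x \in pre c.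
Proof.
move=> cN; rewrite !mem_pre => /andP[xc Fxc].
have [_ -> _] := HF (leq_trans xc cN); by rewrite Fxc xc.
Qed.

Lemma suf_closed c x : c <= N -> x \in suf c -> F x \in suf c.
Proof.
move=> cN; rewrite !mem_suf // => /and3P[cx xN cFx].
have [FN -> _] := HF xN; by rewrite cFx FN cx.
Qed.

Lemma pre_lt c x : c <= N -> x \in pre c -> x < N.
Proof. by move=> cN; rewrite mem_pre => /andP[xc _]; apply: leq_trans cN. Qed.

Lemma suf_lt c x : c <= N -> x \in suf c -> x < N.
Proof. by move=> cN; rewrite mem_suf // => /and3P[]. Qed.

Lemma F_inj_in (X : seq nat) : (forall x, x \in X -> x < N) -> {in X &, injective F}.
Proof.
move=> XN x y xX yX E.
have [_ ex _] := HF (XN _ xX); have [_ ey _] := HF (XN _ yX).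
by rewrite -ex E ey.
Qed.

Lemma size_opl_opr c : c <= N -> size (opl c) = size (opr c).
Proof.
move=> cN.
have oN x : x \in opl c -> x < N by rewrite mem_opl => /andP[xc _]; apply: leq_trans cN.
have rN x : x \in opr c -> x < N by rewrite mem_opr // => /and3P[].
apply/eqP; rewrite eqn_leq; apply/andP; split.
  rewrite -(size_map F); apply: uniq_leq_size.
    by rewrite map_inj_in_uniq ?(sorted_uniq_ltn (sorted_opl c)) //; apply: F_inj_in.
  move=> y /mapP [x xo ->]; move: (xo); rewrite mem_opl mem_opr // => /andP[xc cF].
  by have [FN -> _] := HF (oN _ xo); rewrite cF FN xc.
rewrite -(size_map F); apply: uniq_leq_size.
  by rewrite map_inj_in_uniq ?(sorted_uniq_ltn (sorted_opr c)) //; apply: F_inj_in.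
move=> y /mapP [x xo ->]; move: (xo); rewrite mem_opl mem_opr // => /and3P[cx xN Fc].
by have [FN -> _] := HF xN; rewrite Fc cx.
Qed.

Lemma even_closed (X : seq nat) : uniq X -> (forall x, x \in X -> x < N) ->
  (forall x, x \in X -> F x \in X) -> ~~ odd (size X).
Proof.
move=> uX XN XF.
set lo := [seq x <- X | x < F x]; set hi := [seq x <- X | F x < x].
have E : size X = size lo + size hi.
  rewrite !size_filter -(count_predC (fun x => x < F x)); congr (_ + _).
  apply: eq_in_count => x xX /=; have [_ _ ne] := HF (XN _ xX).
  by rewrite -leqNgt leq_eqVlt; case: eqVneq.
have inj := F_inj_in XN.
have L1 : size lo <= size hi.
  rewrite -(size_map F); apply: uniq_leq_size.
    rewrite map_inj_in_uniq ?filter_uniq //.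
    by move=> x y; rewrite !mem_filter => /andP[_ xX] /andP[_ yX]; apply: inj.
  move=> y /mapP [x]; rewrite mem_filter => /andP[lt xX] ->.
  by rewrite mem_filter; have [_ -> _] := HF (XN _ xX); rewrite lt XF.
have L2 : size hi <= size lo.
  rewrite -(size_map F); apply: uniq_leq_size.
    rewrite map_inj_in_uniq ?filter_uniq //.
    by move=> x y; rewrite !mem_filter => /andP[_ xX] /andP[_ yX]; apply: inj.
  move=> y /mapP [x]; rewrite mem_filter => /andP[lt xX] ->.
  by rewrite mem_filter; have [_ -> _] := HF (XN _ xX); rewrite lt XF.
have E2 : size hi = size lo by apply/eqP; rewrite eqn_leq L1 L2.
by rewrite E E2 addnn odd_double.
Qed.

End Lists.

Lemma cont_embP k m (s : mfun k) (t : mfun m) :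
  contains s t <-> embP k.*2 m.*2 (natf s) (natf t) (fun _ => True).
Proof.
split=> [/containsP [e he] | [e [he _]]]; last by apply/containsP; exists e.
by exists e.
Qed.

Definition resm m n (f : mfun n) (X : seq nat) : mfun m :=
  mkf (m.*2) (res (natf f) X).

Lemma natf_resm m n (f : mfun n) X x :
  size X = m.*2 -> (forall y, y \in X -> natf f y \in X) -> x < m.*2 ->
  natf (resm m f X) x = res (natf f) X x.
Proof.
move=> sX XF lx; rewrite natf_mkf // /res -sX index_mem; apply: XF.
by rewrite mem_nth // sX.
Qed.

Lemma resm_matching m n (f : mfun n) X :
  is_matching f -> size X = m.*2 -> uniq X -> (forall y, y \in X -> y < n.*2) ->
  (forall y, y \in X -> natf f y \in X) -> is_matching (resm m f X).
Proof.
move=> /matchingP HF sX uX XN XF; apply/matchingP => x lx.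
have xX : nth 0 X x \in X by rewrite mem_nth // sX.
have yl : res (natf f) X x < m.*2 by rewrite /res -sX index_mem XF.
rewrite !natf_resm //; split => //.
  rewrite /res nth_index ?XF //.
  by have [_ -> _] := HF _ (XN _ xX); rewrite index_uniq // sX.
rewrite /res => E.
have [_ _ ne] := HF _ (XN _ xX); apply: ne.
by rewrite -(nth_index 0 (XF _ xX)) E.
Qed.

Lemma cont_resm k m n (s : mfun k) (f : mfun n) X :
  sorted ltn X -> size X = m.*2 -> (forall y, y \in X -> y < n.*2) ->
  (forall y, y \in X -> natf f y \in X) ->
  contains s (resm m f X) <-> embP k.*2 n.*2 (natf s) (natf f) (fun x => x \in X).
Proof.
move=> sX szX XN XF; rewrite cont_embP.
have E : forall x, x < m.*2 -> natf (resm m f X) x = res (natf f) X x.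
  by move=> x; apply: natf_resm.
split=> H.
  have H1 : embP k.*2 (size X) (natf s) (res (natf f) X) (fun _ => True).
    by rewrite szX; apply: embP_ext H.
  by move/(@K2 _ _ _ _ _ (fun _ => True) sX XN XF): H1; apply: embP_mono => x [].
have H1 : embP k.*2 (size X) (natf s) (res (natf f) X) (fun _ => True).
  by apply/(@K2 _ _ _ _ _ (fun _ => True) sX XN XF); move: H; apply: embP_mono.
by rewrite szX in H1; apply: embP_ext H1 => // x /E ->.
Qed.

Lemma natf_juxt a b (s : mfun a) (t : mfun b) x : x < (a + b).*2 ->
  natf (juxt s t) x = if x < a.*2 then natf s x else a.*2 + natf t (x - a.*2).
Proof.
move=> lx; rewrite natf_mkf //; case: ifP => h; rewrite doubleD in lx *.
  by apply: leq_trans (natf_lt _ h) (leq_addr _ _).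
by rewrite ltn_add2l natf_lt // ltn_subLR // leqNgt h.
Qed.

Lemma cont_juxt a b n (s : mfun a) (t : mfun b) (f : mfun n) :
  is_matching s -> is_matching t ->
  contains (juxt s t) f <->
  exists c, embP a.*2 n.*2 (natf s) (natf f) (fun x => x < c /\ natf f x < c) /\
            embP b.*2 n.*2 (natf t) (natf f) (fun x => c <= x /\ c <= natf f x).
Proof.
move=> /matchingP HS /matchingP HT.
set F := natf f; set S := natf s; set T := natf t.
set K1 := a.*2; set K2 := b.*2.
move: HS HT; rewrite -/S -/T -/K1 -/K2 => HS HT.
have JE : forall x, x < K1 + K2 -> natf (juxt s t) x = if x < K1 then S x else K1 + T (x - K1).
  by move=> x lx; apply: natf_juxt; rewrite doubleD.
have EK : (a + b).*2 = K1 + K2 by rewrite doubleD.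
split.
  move/containsP => [e [h1 h2 h3]].
  have h3' p q : p < K1 + K2 -> q < K1 + K2 ->
      (F (e p) = e q <-> (if p < K1 then S p else K1 + T (p - K1)) = q).
    by move=> lp lq; rewrite -JE //; apply: h3; lia.
  have eFS p : p < K1 -> F (e p) = e (S p).
    move=> lp; have [lS _ _] := HS p lp.
    have H := h3' p (S p) ltac:(lia) ltac:(lia). by apply/H; rewrite lp.
  have eFT p : p < K2 -> F (e (K1 + p)) = e (K1 + T p).
    move=> lp; have [lT _ _] := HT p lp.
    have H := h3' (K1 + p) (K1 + T p) ltac:(lia) ltac:(lia).
    by apply/H; rewrite ltnNge leq_addr /= addKn.
  have emono p q : p <= q -> q < K1 + K2 -> e p <= e q.
    by move=> lpq lq; rewrite leq_eqVlt in lpq; case/orP: lpq => [/eqP -> //|lpq];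
       apply: ltnW; apply: h2; lia.
  exists (if K1 == 0 then 0 else (e K1.-1).+1); split.
    exists e; split.
      split.
      - by move=> p lp; apply: h1; lia.
      - by move=> p q lpq lq; apply: h2 => //; lia.
      - move=> p q lp lq; rewrite h3' ?lp //; lia.
    move=> p lp; have -> : (K1 == 0) = false by apply/negbTE; lia.
    rewrite eFS // !ltnS; have [lS _ _] := HS p lp.
    by split; apply: emono; lia.
  exists (fun p => e (K1 + p)); split.
    split.
    - by move=> p lp; apply: h1; lia.
    - by move=> p q lpq lq; apply: h2 => //; lia.
    - move=> p q lp lq; rewrite h3'; try lia.
      rewrite ltnNge leq_addr /= addKn; lia.
  move=> p lp; rewrite eFT //; have [lT _ _] := HT p lp.
  case: eqP => // K0; split; apply: h2; lia.
move=> [c [[e1 [[g1 g2 g3] gp]] [e2 [[k1 k2 k3] kp]]]].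
apply/containsP; rewrite -/F.
exists (fun p => if p < K1 then e1 p else e2 (p - K1)); split.
- by move=> p lp; case: (ltnP p K1) => h; [apply: g1 | apply: k1]; lia.
- move=> p q lpq lq; case: (ltnP p K1) => hp; case: (ltnP q K1) => hq.
  + by apply: g2.
  + by have [h _] := gp p hp; have [h' _] := kp (q - K1) ltac:(lia); lia.
  + lia.
  + by apply: k2; lia.
- move=> p q lp lq; rewrite JE; last lia; case: (ltnP p K1) => hp; case: (ltnP q K1) => hq.
  + exact: g3.
  + have [_ h] := gp p hp; have [h' _] := kp (q - K1) ltac:(lia).
    have [lS _ _] := HS p hp. split; lia.
  + have [_ h] := kp (p - K1) ltac:(lia); have [h' _] := gp q hq.
    split; lia.
  + have := k3 (p - K1) (q - K1) ltac:(lia) ltac:(lia).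
    move=> H; split => [/H E | E]; first lia.
    apply/H; lia.
Qed.

Lemma bump_lt r i j : (bump r i < bump r j) = (i < j).
Proof. rewrite /bump; case: (leqP r i); case: (leqP r j) => /= *; lia. Qed.

Lemma del_last_resm l (f : mfun l) : 0 < l -> is_matching f ->
  let r := natf f (l.*2).-1 in
  del_last f = resm l.-1 f [seq bump r i | i <- iota 0 (l.-1).*2].
Proof.
move=> l0 /matchingP HF r; set Y := [seq _ | _ <- _].
apply/ffunP => i; rewrite !ffunE; congr insubd.
set x := val i; have lx : x < (l.-1).*2 := ltn_ord i.
have Ll : (l.-1).*2 = (l.*2).-1.-1 by lia.
rewrite /res (nth_map 0) ?size_iota // nth_iota // add0n.
have [rl rr rne] := HF ((l.*2).-1) ltac:(lia).
rewrite -/r in rl rr rne.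
have bl : bump r x < (l.*2).-1.
  rewrite /bump; case: (leqP r x) => /= _; lia.
have bne : bump r x != r by rewrite eq_sym neq_bump.
have [zl zz zne] := HF (bump r x) ltac:(lia).
set z := natf f (bump r x).
have zr : z != r.
  apply/eqP => E; move: zz; rewrite -/z E rr => E2; move: bl; rewrite -E2; lia.
have zL : z < (l.*2).-1.
  have : z != (l.*2).-1.
    apply/eqP => E; move: zz; rewrite -/z E -/r => E2; by move: bne; rewrite -E2 eqxx.
  lia.
have rL : r < (l.*2).-1.
  have : r != (l.*2).-1 by apply/eqP.
  lia.
have ul : unbump r z < (l.-1).*2.
  move: zr; rewrite neq_ltn /unbump; case: (ltnP r z) => h /= zr; lia.
have uY : uniq Y.
  by rewrite map_inj_uniq ?iota_uniq //; apply: can_inj (bumpK r).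
have E : nth 0 Y (unbump r z) = z.
  by rewrite (nth_map 0) ?size_iota // nth_iota // add0n unbumpK // inE.
rewrite -/r -{2}E index_uniq //.
by rewrite /Y size_map size_iota.
Qed.

Lemma cont_del_last k l (s : mfun k) (f : mfun l) : 0 < l -> is_matching f ->
  contains s (del_last f) <->
  embP k.*2 l.*2 (natf s) (natf f)
    (fun x => x < (l.*2).-1 /\ x <> natf f (l.*2).-1).
Proof.
move=> l0 Hf; have /matchingP HF := Hf.
rewrite (del_last_resm l0 Hf) /=.
set r := natf f (l.*2).-1; set Y := [seq _ | _ <- _].
have [rl rr rne] := HF ((l.*2).-1) ltac:(lia).
rewrite -/r in rl rr rne.
have rL : r < (l.*2).-1.
  have : r != (l.*2).-1 by apply/eqP.
  lia.
have memY x : (x \in Y) = (x < (l.*2).-1) && (x != r).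
  apply/mapP/andP => [[i] | [xl xr]].
    rewrite mem_iota add0n => /andP[_ il] ->; split; last by rewrite eq_sym neq_bump.
    rewrite /bump; case: (leqP r i) => /= _; lia.
  exists (unbump r x); last by rewrite unbumpK // inE.
  rewrite mem_iota add0n /=; move: xr; rewrite neq_ltn /unbump.
  by case: (ltnP r x) => h /= xr; lia.
have sY : sorted ltn Y.
  by apply: homo_sorted; [move=> i j /=; rewrite bump_lt | apply: iota_ltn_sorted].
have szY : size Y = (l.-1).*2 by rewrite size_map size_iota.
have YN y : y \in Y -> y < l.*2 by rewrite memY => /andP[h _]; lia.
have YF y : y \in Y -> natf f y \in Y.
  rewrite !memY => /andP[yl yr].
  have [Fl FF Fne] := HF y ltac:(lia).
  have Fr : natf f y != r.
    by apply/eqP => E; move: FF; rewrite E rr => E2; move: yl; rewrite E2 ltnn.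
  have FL : natf f y != (l.*2).-1.
    apply/eqP => E; move: FF; rewrite E -/r => E2; by move: yr; rewrite E2 eqxx.
  rewrite Fr andbT; lia.
rewrite (cont_resm s sY szY YN YF).
split; apply: embP_mono => x; rewrite memY.
  by move/andP=> [h1 /eqP h2].
by move=> [h1 h2]; apply/andP; split => //; apply/eqP.
Qed.

Lemma min_ex (P : nat -> Prop) N : P N -> exists c, P c /\ forall c', c' < c -> ~ P c'.
Proof.
elim: N {-2}N (leqnn N) => [|N IH] m lm Pm.
  by exists m; split => // c'; move: lm; rewrite leqn0 => /eqP ->.
case: (classic (exists c', c' < m /\ P c')) => [[c' [lc Pc]] | H].
  by apply: (IH c') => //; lia.
by exists m; split => // c' lc Pc; apply: H; exists c'.
Qed.

Lemma embP_mono_range K M S T (P Q : nat -> Prop) :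
  (forall x, x < M -> P x -> Q x) -> embP K M S T P -> embP K M S T Q.
Proof.
by move=> h [e [[h1 h2 h3] hp]]; exists e; split=> // p lp; apply: h; [apply: h1|apply: hp].
Qed.

Lemma embP_size K M S T (P : nat -> Prop) (X : seq nat) :
  embP K M S T P -> (forall x, P x -> x \in X) -> K <= size X.
Proof.
move=> [e [[h1 h2 h3] hp]] PX.
rewrite -(size_iota 0 K) -(size_map e); apply: uniq_leq_size.
  rewrite map_inj_in_uniq ?iota_uniq // => p q; rewrite !mem_iota /= !add0n => lp lq E.
  case: (ltngtP p q) => // h; [have := h2 p q h lq | have := h2 q p h lp]; lia.
move=> y /mapP [p]; rewrite mem_iota add0n => /andP[_ lp] ->; apply: PX; exact: hp.
Qed.

Section Pref.
Variables (a n : nat) (s : mfun a) (f : mfun n).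
Hypothesis Hf : is_matching f.
Let F := natf f.
Let N := n.*2.

Definition cpr c := embP a.*2 N (natf s) F (fun x => x < c /\ F x < c).

Lemma pre_rcons c : 0 < c -> F c.-1 < c ->
  pre F c = rcons [seq i <- iota 0 c.-1 | F i < c] c.-1.
Proof.
move=> c0 Fc; rewrite /pre.
have -> : iota 0 c = rcons (iota 0 c.-1) c.-1.
  by rewrite -cats1 -{1}(prednK c0) -addn1 iotaD add0n.
by rewrite filter_rcons Fc.
Qed.

Lemma prefix_del l c : 0 < l -> c <= N -> size (pre F c) = l.*2 -> F c.-1 < c ->
  contains s (del_last (resm l f (pre F c))) <-> cpr c.-1.
Proof.
move=> l0 cN szP Fc.
have HF : nmatch N F by apply/matchingP.
have c0 : 0 < c.
  case: c cN szP Fc => // _; rewrite /pre /= => E; lia.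
set X := pre F c.
have sX : sorted ltn X := sorted_pre F c.
have uX := sorted_uniq_ltn sX.
have XN x : x \in X -> x < N := @pre_lt N F c x cN.
have XF x : x \in X -> F x \in X := pre_closed HF cN.
have Hmu : is_matching (resm l f X) by apply: resm_matching.
rewrite (cont_del_last s l0 Hmu).
have E x : x < l.*2 -> natf (resm l f X) x = res F X x.
  by move=> lx; apply: natf_resm.
have Ll : (l.*2).-1 < l.*2 by lia.
rewrite (E _ Ll).
set L := [seq i <- iota 0 c.-1 | F i < c].
have XL : X = rcons L c.-1 by apply: pre_rcons.
have szL : size L = (l.*2).-1 by move: szP; rewrite -/X XL size_rcons; lia.
have nthX : nth 0 X (l.*2).-1 = c.-1 by rewrite XL nth_rcons szL ltnn eqxx.
have c1L : c.-1 \notin L by rewrite mem_filter mem_iota; lia.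
have idxX x : x \in X -> (index x X < (l.*2).-1) = (x \in L).
  rewrite XL -cats1 index_cat; case: ifP => h; first by rewrite -szL index_mem h.
  by move=> _; apply/negbTE; rewrite szL -leqNgt leq_addr.
have Fc1X : F c.-1 \in X.
  rewrite /X mem_pre Fc; have [_ -> _] := HF c.-1 ltac:(lia); lia.
have key x : x < N ->
  (x \in X /\ (index x X < (l.*2).-1 /\ index x X <> res F X (l.*2).-1)) <->
  (x < c.-1 /\ F x < c.-1).
  move=> xN; rewrite /res nthX; have [FxN FFx Fxne] := HF x xN.
  split.
    move=> [xX [h1 h2]]; move: (h1); rewrite idxX // => xL.
    move: (xL); rewrite mem_filter mem_iota => /andP[Fxc /andP[_ xc]].
    split; first lia.
    have : F x != c.-1.
      apply/eqP => E1; apply: h2; by rewrite -E1 FFx.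
    lia.
  move=> [xc Fxc].
  have xX : x \in X by rewrite /X mem_pre; lia.
  have xL : x \in L by rewrite mem_filter mem_iota; lia.
  split => //; split; first by rewrite idxX.
  move=> E1; have E2 : x = F c.-1.
    by rewrite -(nth_index 0 xX) E1 nth_index.
  by move: Fxc; rewrite E2; have [_ -> _] := HF c.-1 ltac:(lia); rewrite ltnn.
split => H.
  have H1 : embP a.*2 (size X) (natf s) (res F X)
      (fun x => x < (l.*2).-1 /\ x <> res F X (l.*2).-1).
    by rewrite szP; apply: embP_ext H => // x /E.
  move/(@K2 _ _ _ _ _ (fun x => x < (l.*2).-1 /\ x <> res F X (l.*2).-1) sX XN XF): H1 => H2.
  by apply: embP_mono_range H2 => x xN /key; apply.
have H1 : embP a.*2 (size X) (natf s) (res F X)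
    (fun x => x < (l.*2).-1 /\ x <> res F X (l.*2).-1).
  apply/(@K2 _ _ _ _ _ (fun x => x < (l.*2).-1 /\ x <> res F X (l.*2).-1) sX XN XF).
  by apply: embP_mono_range H => x xN /key; apply.
by rewrite szP in H1; apply: embP_ext H1 => // x /E ->.
Qed.

End Pref.

Definition Sgen n l k m (P : {set mfun l}) (Q : {set mfun m}) : {set mfun n} :=
  [set f : mfun n | [&& is_matching f, size (opl (natf f) (l.*2 + k)) == k,
    (l.*2 + k == 0) || (natf f (l.*2 + k).-1 < l.*2 + k),
    resm l f (pre (natf f) (l.*2 + k)) \in P &
    resm m f (suf n.*2 (natf f) (l.*2 + k)) \in Q]].

Definition cqr b n (t : mfun b) (f : mfun n) c :=
  embP b.*2 n.*2 (natf t) (natf f) (fun x => c <= x /\ c <= natf f x).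

Section Char.
Variables (a b n : nat) (s : mfun a) (t : mfun b) (f : mfun n).
Hypothesis Hf : is_matching f.

Lemma cont_pre l c : c <= n.*2 -> size (pre (natf f) c) = l.*2 ->
  contains s (resm l f (pre (natf f) c)) <-> cpr s f c.
Proof.
move=> cN sz; have HF : nmatch n.*2 (natf f) by apply/matchingP.
rewrite (cont_resm s (sorted_pre _ _) sz (fun x => @pre_lt _ _ _ x cN)
            (fun x => pre_closed HF cN)).
by split; apply: embP_mono => x; rewrite mem_pre => /andP.
Qed.

Lemma cont_suf m c : c <= n.*2 -> size (suf n.*2 (natf f) c) = m.*2 ->
  contains t (resm m f (suf n.*2 (natf f) c)) <-> cqr t f c.
Proof.
move=> cN sz; have HF : nmatch n.*2 (natf f) by apply/matchingP.
rewrite (cont_resm t (sorted_suf _ _ _) sz (fun x => @suf_lt _ _ _ x cN)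
            (fun x => suf_closed HF cN)).
split; apply: embP_mono_range => x xN; rewrite mem_suf //.
  by case/and3P.
by move=> [h1 h2]; rewrite h1 h2 xN.
Qed.

Lemma match_pre l c : c <= n.*2 -> size (pre (natf f) c) = l.*2 ->
  is_matching (resm l f (pre (natf f) c)).
Proof.
move=> cN sz; have HF : nmatch n.*2 (natf f) by apply/matchingP.
apply: resm_matching => //; first exact: (sorted_uniq_ltn (sorted_pre _ _)).
- by move=> x; apply: (pre_lt cN).
- by move=> x; apply: (pre_closed HF cN).
Qed.

Lemma match_suf m c : c <= n.*2 -> size (suf n.*2 (natf f) c) = m.*2 ->
  is_matching (resm m f (suf n.*2 (natf f) c)).
Proof.
move=> cN sz; have HF : nmatch n.*2 (natf f) by apply/matchingP.
apply: resm_matching => //; first exact: (sorted_uniq_ltn (sorted_suf _ _ _)).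
- by move=> x; apply: (suf_lt cN).
- by move=> x; apply: (suf_closed HF cN).
Qed.

Lemma charS l k : l + k <= n ->
  (f \in @Sgen n l k (n - l - k) (mu l s) (Mset (n - l - k) t)) <->
  [/\ size (opl (natf f) (l.*2 + k)) = k,
      l.*2 + k = 0 \/ natf f (l.*2 + k).-1 < l.*2 + k,
      cpr s f (l.*2 + k),
      l = 0 \/ ~ cpr s f (l.*2 + k).-1 &
      ~ cqr t f (l.*2 + k)].
Proof.
move=> lkn; set c := l.*2 + k.
have HF : nmatch n.*2 (natf f) by apply/matchingP.
have cN : c <= n.*2 by rewrite /c; lia.
have szpo := size_pre_opl (natf f) c.
have szso := size_suf_opr n.*2 (natf f) c.
have oo := size_opl_opr HF cN.
rewrite inE Hf /=.
have Hszp : size (opl (natf f) c) = k -> size (pre (natf f) c) = l.*2.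
  move=> h; rewrite h in szpo; rewrite /c in szpo *; lia.
have Hszs : size (opl (natf f) c) = k -> size (suf n.*2 (natf f) c) = (n - l - k).*2.
  move=> h; rewrite -oo h in szso; rewrite /c in szso *; lia.
split.
  move/and4P => [/eqP szo Hc Hmu Hmt].
  have Hc' : c = 0 \/ natf f c.-1 < c by case/orP: Hc => [/eqP|]; [left|right].
  move: Hmu; rewrite inE => /and3P[_ Hcont Hlast].
  move: Hmt; rewrite inE => /andP[_ Hnt].
  split => //.
  - by apply/(cont_pre cN (Hszp szo)).
  - case: (posnP l) => [->|l0]; first by left.
    right; have Hl := Hlast; rewrite gtn_eqF //= in Hl.
    have Fc : natf f c.-1 < c by case: Hc' => // c0; rewrite /c in c0; lia.
    move=> H; move/negP: Hl; apply.
    by apply/(prefix_del s Hf l0 cN (Hszp szo) Fc).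
  - by move=> H; move/negP: Hnt; apply; apply/(cont_suf cN (Hszs szo)).
move=> [szo Hc Hcp Hl Hcq].
apply/and4P; split.
- by apply/eqP.
- by apply/orP; case: Hc => [E|E]; [left; apply/eqP | right]; exact: E.
- rewrite inE (match_pre cN (Hszp szo)) /=; apply/andP; split.
    by apply/(cont_pre cN (Hszp szo)).
  case: (posnP l) => [->//|l0]; apply/orP; right; apply/negP => H.
  case: Hl => [l00|Hl]; first by rewrite l00 in l0.
  have Fc : natf f c.-1 < c by case: Hc => // c0; rewrite /c in c0; lia.
  by apply: Hl; apply/(prefix_del s Hf l0 cN (Hszp szo) Fc).
- rewrite inE (match_suf cN (Hszs szo)) /=; apply/negP => H.
  by apply: Hcq; apply/(cont_suf cN (Hszs szo)).
Qed.

End Char.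

Section Alog.
Variables (a b n : nat) (s : mfun a) (t : mfun b).
Hypotheses (Hs : is_matching s) (Ht : is_matching t).

Definition Aset : {set mfun n} :=
  [set f : mfun n | [&& is_matching f, contains s f & ~~ contains (juxt s t) f]].

Definition SS l k := @Sgen n l k (n - l - k) (mu l s) (Mset (n - l - k) t).

Lemma cpr_mono (f : mfun n) c1 c2 : c1 <= c2 -> cpr s f c1 -> cpr s f c2.
Proof. by move=> h; apply: embP_mono => x [h1 h2]; split; apply: leq_trans h. Qed.

Lemma cqr_anti (f : mfun n) c1 c2 : c1 <= c2 -> cqr t f c2 -> cqr t f c1.
Proof. by move=> h; apply: embP_mono => x [h1 h2]; split; apply: leq_trans h1 || apply: leq_trans h2. Qed.

Lemma minS (f : mfun n) l k : is_matching f -> l + k <= n -> f \in SS l k ->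
  cpr s f (l.*2 + k) /\ forall c', c' < l.*2 + k -> ~ cpr s f c'.
Proof.
move=> Hf lkn /(charS s t Hf lkn) [szo Hc Hcp Hl Hcq]; split => // c' lc.
case: Hl => [l0 | Hl].
  exfalso; subst l; move: szo Hc lc; rewrite double0 add0n => szo Hc lc.
  have szpo := size_pre_opl (natf f) k; rewrite szo in szpo.
  have sz0 : size (pre (natf f) k) = 0 by lia.
  case: Hc => [k0 | Fk]; first by move: lc; rewrite k0.
  have : k.-1 \in pre (natf f) k by rewrite mem_pre Fk andbT; lia.
  by move/eqP: sz0; rewrite size_eq0 => /eqP ->.
by move=> H; apply: Hl; apply: cpr_mono H; lia.
Qed.

Lemma SinA l k (f : mfun n) : l + k <= n -> f \in SS l k -> f \in Aset.
Proof.
move=> lkn fS.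
have Hf : is_matching f by move: fS; rewrite inE => /andP[].
have [Hcp Hmin] := minS Hf lkn fS.
have [_ _ _ _ Hcq] := (charS s t Hf lkn).1 fS.
rewrite inE Hf /=; apply/andP; split.
  by apply/cont_embP; apply: embP_mono Hcp.
apply/negP => /(cont_juxt f Hs Ht) [c' [Hp Hq]].
case: (ltnP c' (l.*2 + k)) => h; first by apply: (Hmin c' h).
by apply: Hcq; apply: cqr_anti Hq.
Qed.

Lemma AinS (f : mfun n) : f \in Aset ->
  exists l k, [/\ a <= l, l + k <= n & f \in SS l k].
Proof.
rewrite inE => /and3P [Hf Hcs Hnj].
have HF : nmatch n.*2 (natf f) by apply/matchingP.
have cpN : cpr s f n.*2.
  move/cont_embP: Hcs; apply: embP_mono_range => x xN _.
  by have [? _ _] := HF x xN.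
have [c0 [Hc0 Hmin]] := min_ex cpN.
have c0N : c0 <= n.*2.
  by rewrite leqNgt; apply/negP => h; apply: (Hmin _ h).
set k0 := size (opl (natf f) c0).
have ev : ~~ odd (size (pre (natf f) c0)).
  apply: (even_closed HF (sorted_uniq_ltn (sorted_pre _ _))).
    by move=> x; apply: (pre_lt c0N).
  by move=> x; apply: (pre_closed HF c0N).
set l0 := (size (pre (natf f) c0))./2.
have szp : size (pre (natf f) c0) = l0.*2 by rewrite even_halfK.
have c0E : c0 = l0.*2 + k0 by rewrite -szp size_pre_opl.
have szso := size_suf_opr n.*2 (natf f) c0.
have oo := size_opl_opr HF c0N.
have lkn : l0 + k0 <= n.
  have := size_pre_opl (natf f) c0; rewrite -/k0 szp; move: szso; rewrite -oo -/k0.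
  lia.
exists l0, k0; split => //.
  have := embP_size Hc0 (P := fun x => x < c0 /\ natf f x < c0) (X := pre (natf f) c0).
  rewrite szp => H; have : a.*2 <= l0.*2 by apply: H => x [h1 h2]; rewrite mem_pre h1 h2.
  by rewrite leq_double.
apply/(charS s t Hf lkn); rewrite -c0E; split => //.
- case: (posnP c0) => [->|c00]; [by left | right].
  rewrite ltnNge; apply/negP => Fc.
  apply: (Hmin c0.-1); first lia.
  move: Hc0; apply: embP_mono_range => x xN [xc Fxc].
  have [FxN FFx Fxne] := HF x xN.
  have xc1 : x != c0.-1 by apply/eqP => E; move: Fxc; rewrite E; lia.
  have Fxc1 : natf f x != c0.-1.
    by apply/eqP => E; move: FFx; rewrite E => E2; move: Fc; rewrite E2; lia.
  split; lia.
- case: (posnP l0) => [->|l00]; [by left | right].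
  by apply: Hmin; lia.
- move=> Hq; move/negP: Hnj; apply; apply/(cont_juxt f Hs Ht).
  by exists c0.
Qed.

Lemma Suniq (f : mfun n) l k l' k' : l + k <= n -> l' + k' <= n ->
  f \in SS l k -> f \in SS l' k' -> l = l' /\ k = k'.
Proof.
move=> lkn lkn' fS fS'.
have Hf : is_matching f by move: fS; rewrite inE => /andP[].
have [H1 M1] := minS Hf lkn fS; have [H2 M2] := minS Hf lkn' fS'.
have cE : l.*2 + k = l'.*2 + k'.
  case: (ltngtP (l.*2 + k) (l'.*2 + k')) => // h.
    by exfalso; apply: (M2 _ h).
  by exfalso; apply: (M1 _ h).
have [szo _ _ _ _] := (charS s t Hf lkn).1 fS.
have [szo' _ _ _ _] := (charS s t Hf lkn').1 fS'.
rewrite cE szo' in szo; subst k'; split => //.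
by move: cE => /eqP; rewrite eqn_add2r => /eqP; lia.
Qed.

End Alog.

Lemma card_sum (T : finType) (A : {set T}) : #|A| = \sum_(x : T) (x \in A : nat).
Proof. by rewrite -sum1_card big_mkcond. Qed.

Lemma cardA a b n (s : mfun a) (t : mfun b) : is_matching s -> is_matching t ->
  #|@Aset a b n s t| = \sum_(a <= l < n.+1) \sum_(k < (n - l).+1) #|@SS a b n s t l k|.
Proof.
move=> Hs Ht.
under eq_bigr do under eq_bigr do rewrite card_sum.
under eq_bigr do rewrite exchange_big.
rewrite exchange_big card_sum /=; apply: eq_bigr => f _.
case: (boolP (f \in Aset n s t)) => fA /=.
  have [l0 [k0 [al0 lkn fS]]] := AinS Hs Ht fA.
  rewrite (bigD1_seq l0) ?iota_uniq //=; last by rewrite mem_index_iota; lia.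
  have lk0 : k0 < (n - l0).+1 by lia.
  rewrite (bigD1 (Ordinal lk0)) //= fS /=.
  rewrite big1; last first.
    move=> k /eqP kne; apply/eqP; rewrite eqb0; apply/negP => fS'.
    have lk : l0 + k <= n by have := ltn_ord k; lia.
    have [_ E] := Suniq Hs Ht lk lkn fS' fS.
    by apply: kne; apply: val_inj.
  rewrite big1_seq // => l /andP [lne]; rewrite mem_index_iota => /andP[al ln].
  apply: big1 => k _; apply/eqP; rewrite eqb0; apply/negP => fS'.
  have lk : l + k <= n by have := ltn_ord k; lia.
  have [E _] := Suniq Hs Ht lk lkn fS' fS.
  by rewrite E eqxx in lne.
rewrite big1_seq // => l /andP [_]; rewrite mem_index_iota => /andP[al ln].
apply: big1 => k _; apply/eqP; rewrite eqb0; apply/negP => fS'.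
have lk : l + k <= n by have := ltn_ord k; lia.
by move/negP: fA; apply; apply: (SinA Hs Ht lk fS').
Qed.

Definition memU M (U : {set 'I_M}) (i : nat) : bool :=
  oapp (fun j : 'I_M => j \in U) false (insub i).
Lemma memU_val M (U : {set 'I_M}) (j : 'I_M) : memU U j = (j \in U).
Proof. by rewrite /memU valK. Qed.
Lemma memU_lt M (U : {set 'I_M}) i : memU U i -> i < M.
Proof. by rewrite /memU; case: insubP => //= j ->. Qed.
Lemma count_memU M (U : {set 'I_M}) : count (memU U) (iota 0 M) = #|U|.
Proof.
rewrite -val_enum_ord count_map cardE /enum_mem size_filter.
rewrite count_filter; apply: eq_count => j /=; by rewrite memU_val inE andbT.
Qed.
Lemma count_memU_ge M M' (U : {set 'I_M}) : M <= M' -> count (memU U) (iota 0 M') = #|U|.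
Proof.
move=> h; rewrite -(subnKC h) iotaD count_cat count_memU add0n.
rewrite (eq_in_count (a2 := pred0)) ?count_pred0 ?addn0 // => i.
rewrite mem_iota => /andP[hi _] /=; apply/negP => /memU_lt; lia.
Qed.
Lemma count_memU_shift M c (U : {set 'I_M}) :
  count (fun i => memU U (i - c)) (iota c M) = #|U|.
Proof.
rewrite -(addn0 c) iotaDl count_map -count_memU; apply: eq_count => i /=.
by rewrite addn0 addKn.
Qed.

Definition pf k (p : {perm 'I_k}) (i : nat) : nat :=
  oapp (fun j : 'I_k => val (p j)) i (insub i).
Lemma pf_val k (p : {perm 'I_k}) (j : 'I_k) : pf p j = p j.
Proof. by rewrite /pf valK. Qed.
Lemma pf_lt k (p : {perm 'I_k}) i : i < k -> pf p i < k.
Proof. by move=> h; rewrite (_ : i = Ordinal h) // pf_val. Qed.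
Lemma pfK k (p : {perm 'I_k}) i : i < k -> pf (p^-1)%g (pf p i) = i.
Proof. by move=> h; rewrite (_ : i = Ordinal h) // !pf_val permK. Qed.
Lemma pfKV k (p : {perm 'I_k}) i : i < k -> pf p (pf (p^-1)%g i) = i.
Proof. by move=> h; rewrite (_ : i = Ordinal h) // !pf_val permKV. Qed.

Section Build.
Variables (l k m n : nat).
Hypothesis Hn : n = l + k + m.
Local Notation c := (l.*2 + k).
Local Notation N := (n.*2).

Definition usL (U : {set 'I_c.-1}) := [seq i <- iota 0 c | memU U i].
Definition xsL (U : {set 'I_c.-1}) := [seq i <- iota 0 c | ~~ memU U i].
Definition vsL (V : {set 'I_(N - c)}) := [seq i <- iota c (N - c) | memU V (i - c)].
Definition ysL (V : {set 'I_(N - c)}) := [seq i <- iota c (N - c) | ~~ memU V (i - c)].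

Definition Gf U V (p : {perm 'I_k}) (mu : mfun l) (nu : mfun m) (x : nat) : nat :=
  if x < c then
    (if memU U x then nth 0 (vsL V) (pf p (index x (usL U)))
     else nth 0 (xsL U) (natf mu (index x (xsL U))))
  else
    (if memU V (x - c) then nth 0 (usL U) (pf (p^-1)%g (index x (vsL V)))
     else nth 0 (ysL V) (natf nu (index x (ysL V)))).

Section Fixed.
Variables (U : {set 'I_c.-1}) (V : {set 'I_(N - c)}) (p : {perm 'I_k})
          (mu : mfun l) (nu : mfun m).
Hypotheses (HU : #|U| = k) (HV : #|V| = k).
Hypotheses (Hmu : is_matching mu) (Hnu : is_matching nu).

Local Notation us := (usL U).
Local Notation xs := (xsL U).
Local Notation vs := (vsL V).
Local Notation ys := (ysL V).
Local Notation G := (Gf U V p mu nu).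

Lemma NcE : N - c = k + m.*2.
Proof. rewrite Hn; lia. Qed.

Lemma size_us : size us = k.
Proof. by rewrite size_filter count_memU_ge //; lia. Qed.
Lemma size_xs : size xs = l.*2.
Proof.
have E := count_predC (memU U) (iota 0 c).
rewrite size_iota count_memU_ge ?HU in E; last lia.
rewrite size_filter.
have -> : count (fun i => ~~ memU U i) (iota 0 c) = count (predC (memU U)) (iota 0 c) by [].
lia.
Qed.
Lemma size_vs : size vs = k.
Proof. by rewrite size_filter count_memU_shift. Qed.
Lemma size_ys : size ys = m.*2.
Proof.
have E := count_predC (fun i => memU V (i - c)) (iota c (N - c)).
rewrite size_iota count_memU_shift HV in E.
have E2 := NcE.
rewrite size_filter.
have -> : count (fun i => ~~ memU V (i - c)) (iota c (N - c)) =
  count (predC (fun i => memU V (i - c))) (iota c (N - c)) by [].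
lia.
Qed.

Lemma mem_us x : (x \in us) = (x < c) && memU U x.
Proof. by rewrite mem_filter mem_iota andbC. Qed.
Lemma mem_xs x : (x \in xs) = (x < c) && ~~ memU U x.
Proof. by rewrite mem_filter mem_iota andbC. Qed.
Lemma mem_vs x : (x \in vs) = [&& c <= x, x < N & memU V (x - c)].
Proof. rewrite mem_filter mem_iota andbC subnKC -?andbA //; lia. Qed.
Lemma mem_ys x : (x \in ys) = [&& c <= x, x < N & ~~ memU V (x - c)].
Proof. rewrite mem_filter mem_iota andbC subnKC -?andbA //; lia. Qed.

Lemma uniq_us : uniq us. Proof. exact/filter_uniq/iota_uniq. Qed.
Lemma uniq_xs : uniq xs. Proof. exact/filter_uniq/iota_uniq. Qed.
Lemma uniq_vs : uniq vs. Proof. exact/filter_uniq/iota_uniq. Qed.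
Lemma uniq_ys : uniq ys. Proof. exact/filter_uniq/iota_uniq. Qed.

Lemma G_xs x : x \in xs -> G x = nth 0 xs (natf mu (index x xs)).
Proof. by rewrite mem_xs /Gf => /andP[-> /negbTE ->]. Qed.
Lemma G_us x : x \in us -> G x = nth 0 vs (pf p (index x us)).
Proof. by rewrite mem_us /Gf => /andP[-> ->]. Qed.
Lemma G_vs x : x \in vs -> G x = nth 0 us (pf (p^-1)%g (index x vs)).
Proof. by rewrite mem_vs /Gf => /and3P[h _ hv]; rewrite ltnNge h /= hv. Qed.
Lemma G_ys x : x \in ys -> G x = nth 0 ys (natf nu (index x ys)).
Proof. by rewrite mem_ys /Gf => /and3P[h _ /negbTE hv]; rewrite ltnNge h /= hv. Qed.

Lemma cases x : x < N -> [\/ x \in xs, x \in us, x \in vs | x \in ys].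
Proof.
move=> xN; rewrite mem_xs mem_us mem_vs mem_ys xN.
case: (ltnP x c) => h /=; case: (memU _ _); by [constructor 1|constructor 2|constructor 3|constructor 4].
Qed.

Lemma idx_lt (X : seq nat) x : x \in X -> index x X < size X.
Proof. by rewrite index_mem. Qed.

Lemma G_xs_in x : x \in xs -> G x \in xs.
Proof.
move=> h; rewrite G_xs // mem_nth // size_xs natf_lt // -size_xs idx_lt //.
Qed.
Lemma G_us_in x : x \in us -> G x \in vs.
Proof.
by move=> h; rewrite G_us // mem_nth // size_vs pf_lt // -size_us idx_lt.
Qed.
Lemma G_vs_in x : x \in vs -> G x \in us.
Proof.
by move=> h; rewrite G_vs // mem_nth // size_us pf_lt // -size_vs idx_lt.
Qed.
Lemma G_ys_in x : x \in ys -> G x \in ys.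
Proof.
move=> h; rewrite G_ys // mem_nth // size_ys natf_lt // -size_ys idx_lt //.
Qed.

Lemma lt_lists x : [|| x \in xs, x \in us, x \in vs | x \in ys] -> x < N.
Proof.
rewrite mem_xs mem_us mem_vs mem_ys.
case/or4P => [/andP[h _]|/andP[h _]|/and3P[_ h _]|/and3P[_ h _]] //; lia.
Qed.

Lemma G_lt x : x < N -> G x < N.
Proof.
move=> xN; apply: lt_lists.
case: (cases xN) => h.
- by rewrite G_xs_in.
- by rewrite G_us_in ?orbT.
- by rewrite G_vs_in ?orbT.
- by rewrite G_ys_in ?orbT.
Qed.

Lemma G_match : nmatch N G.
Proof.
move=> x xN; split; first exact: G_lt.
- case: (cases xN) => h.
  + have /matchingP HM := Hmu.
    have il : index x xs < l.*2 by rewrite -size_xs idx_lt.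
    have [ml mm _] := HM _ il.
    rewrite G_xs ?G_xs_in // G_xs // index_uniq ?size_xs ?uniq_xs //.
    by rewrite mm nth_index.
  + have il : index x us < k by rewrite -size_us idx_lt.
    rewrite G_vs ?G_us_in // G_us // index_uniq ?size_vs ?uniq_vs ?pf_lt //.
    by rewrite pfK // nth_index.
  + have il : index x vs < k by rewrite -size_vs idx_lt.
    rewrite G_us ?G_vs_in // G_vs // index_uniq ?size_us ?uniq_us ?pf_lt //.
    by rewrite pfKV // nth_index.
  + have /matchingP HM := Hnu.
    have il : index x ys < m.*2 by rewrite -size_ys idx_lt.
    have [ml mm _] := HM _ il.
    rewrite G_ys ?G_ys_in // G_ys // index_uniq ?size_ys ?uniq_ys //.
    by rewrite mm nth_index.
- case: (cases xN) => h.
  + have /matchingP HM := Hmu.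
    have il : index x xs < l.*2 by rewrite -size_xs idx_lt.
    have [ml _ mne] := HM _ il.
    rewrite G_xs // => E; apply: mne.
    by rewrite -{2}E index_uniq ?size_xs ?uniq_xs.
  + move=> E; have := G_us_in h; rewrite E.
    by move: h; rewrite mem_us mem_vs => /andP[h _] /andP[h' _]; lia.
  + move=> E; have := G_vs_in h; rewrite E.
    by move: h; rewrite mem_us mem_vs => /andP[h _] /andP[h' _]; lia.
  + have /matchingP HM := Hnu.
    have il : index x ys < m.*2 by rewrite -size_ys idx_lt.
    have [ml _ mne] := HM _ il.
    rewrite G_ys // => E; apply: mne.
    by rewrite -{2}E index_uniq ?size_ys ?uniq_ys.
Qed.

Definition bf : mfun n := mkf N G.

Lemma natf_bf x : x < N -> natf bf x = G x.
Proof. by move=> xN; rewrite natf_mkf // G_lt. Qed.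

Lemma bf_match : is_matching bf.
Proof.
apply/matchingP => x xN; have [h1 h2 h3] := G_match xN.
by rewrite !natf_bf.
Qed.

Lemma opl_bf : opl (natf bf) c = us.
Proof.
apply: eq_in_filter => i; rewrite mem_iota add0n /= => ic.
rewrite natf_bf; last by rewrite Hn; lia.
case: (boolP (memU U i)) => h.
  have iu : i \in us by rewrite mem_us ic.
  by have := G_us_in iu; rewrite mem_vs => /andP[-> _].
have ix : i \in xs by rewrite mem_xs ic.
by have := G_xs_in ix; rewrite mem_xs => /andP[h' _]; apply/negbTE; rewrite -ltnNge.
Qed.

Lemma pre_bf : pre (natf bf) c = xs.
Proof.
apply: eq_in_filter => i; rewrite mem_iota add0n /= => ic.
rewrite natf_bf; last by rewrite Hn; lia.
case: (boolP (memU U i)) => h /=.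
  have iu : i \in us by rewrite mem_us ic.
  by have := G_us_in iu; rewrite mem_vs => /andP[h' _]; apply/negbTE; rewrite -leqNgt.
have ix : i \in xs by rewrite mem_xs ic.
by have := G_xs_in ix; rewrite mem_xs => /andP[-> _].
Qed.

Lemma opr_bf : opr N (natf bf) c = vs.
Proof.
apply: eq_in_filter => i; rewrite mem_iota => /andP[ci iN].
have iN' : i < N by move: iN; rewrite subnKC //; rewrite Hn; lia.
rewrite natf_bf //.
case: (boolP (memU V (i - c))) => h /=.
  have iv : i \in vs by rewrite mem_vs ci iN'.
  by have := G_vs_in iv; rewrite mem_us => /andP[-> _].
have iy : i \in ys by rewrite mem_ys ci iN'.
by have := G_ys_in iy; rewrite mem_ys => /andP[h' _]; apply/negbTE; rewrite -leqNgt.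
Qed.

Lemma suf_bf : suf N (natf bf) c = ys.
Proof.
apply: eq_in_filter => i; rewrite mem_iota => /andP[ci iN].
have iN' : i < N by move: iN; rewrite subnKC //; rewrite Hn; lia.
rewrite natf_bf //.
case: (boolP (memU V (i - c))) => h /=.
  have iv : i \in vs by rewrite mem_vs ci iN'.
  by have := G_vs_in iv; rewrite mem_us => /andP[h' _]; apply/negbTE; rewrite -ltnNge.
have iy : i \in ys by rewrite mem_ys ci iN'.
by have := G_ys_in iy; rewrite mem_ys => /andP[-> _].
Qed.

Lemma resm_pre_bf : resm l bf (pre (natf bf) c) = mu.
Proof.
rewrite pre_bf; apply: natf_inj => i il.
have ixs : nth 0 xs i \in xs by rewrite mem_nth // size_xs.
rewrite natf_resm //; first last.
- by move=> y yx; rewrite natf_bf ?G_xs_in // lt_lists // yx.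
- exact: size_xs.
have ii : index (nth 0 xs i) xs = i by rewrite index_uniq ?size_xs ?uniq_xs.
by rewrite /res natf_bf ?lt_lists ?ixs // G_xs // ii index_uniq ?size_xs ?uniq_xs ?natf_lt.
Qed.

Lemma resm_suf_bf : resm m bf (suf N (natf bf) c) = nu.
Proof.
rewrite suf_bf; apply: natf_inj => i il.
have iys : nth 0 ys i \in ys by rewrite mem_nth // size_ys.
rewrite natf_resm //; first last.
- by move=> y yx; rewrite natf_bf ?G_ys_in // lt_lists // yx !orbT.
- exact: size_ys.
have ii : index (nth 0 ys i) ys = i by rewrite index_uniq ?size_ys ?uniq_ys.
by rewrite /res natf_bf ?lt_lists ?iys ?orbT // G_ys // ii index_uniq ?size_ys ?uniq_ys ?natf_lt.
Qed.

Lemma pf_bf i : i < k -> pf p i = index (natf bf (nth 0 us i)) vs.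
Proof.
move=> ik; have ius : nth 0 us i \in us by rewrite mem_nth // size_us.
have hl : nth 0 us i < N by apply: lt_lists; rewrite ius orbT.
have ii : index (nth 0 us i) us = i by rewrite index_uniq ?size_us ?uniq_us.
by rewrite natf_bf // G_us // ii index_uniq ?size_vs ?uniq_vs ?pf_lt.
Qed.

Lemma last_bf : (c == 0) || (natf bf c.-1 < c).
Proof.
case: (posnP c) => [->//|c0]; apply/orP; right.
have ix : c.-1 \in xs.
  rewrite mem_xs; apply/andP; split; first lia.
  by apply/negP => /memU_lt; lia.
rewrite natf_bf ?lt_lists ?ix //.
by have := G_xs_in ix; rewrite mem_xs => /andP[].
Qed.

Lemma bf_in (P : {set mfun l}) (Q : {set mfun m}) :
  mu \in P -> nu \in Q -> bf \in @Sgen n l k m P Q.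
Proof.
move=> muP nuQ; rewrite inE bf_match opl_bf size_us eqxx last_bf /=.
by rewrite resm_pre_bf resm_suf_bf muP nuQ.
Qed.

End Fixed.
End Build.

Section Surj.
Variables (l k m n : nat).
Hypothesis Hn : n = l + k + m.
Local Notation c := (l.*2 + k).
Local Notation N := (n.*2).

Lemma surj (P : {set mfun l}) (Q : {set mfun m}) (f : mfun n) :
  f \in @Sgen n l k m P Q ->
  exists (U : {set 'I_c.-1}) (V : {set 'I_(N - c)}) (p : {perm 'I_k}) mu nu,
    [/\ #|U| = k, #|V| = k, mu \in P, nu \in Q & @bf l k m n U V p mu nu = f].
Proof.
rewrite inE => /and5P[Hf /eqP szo Hc HmuP HnuQ].
have HF : nmatch N (natf f) by apply/matchingP.
set F := natf f in HF Hc szo HmuP HnuQ *.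
have cN : c <= N by rewrite Hn; lia.
pose U := [set j : 'I_c.-1 | c <= F j].
pose V := [set j : 'I_(N - c) | F (c + j) < c].
have memUE i : memU U i = (i < c.-1) && (c <= F i).
  rewrite /memU; case: insubP => [j lt E|nlt] /=; first by rewrite inE -E ltn_ord.
  by rewrite (negbTE nlt).
have memVE i : memU V i = (i < N - c) && (F (c + i) < c).
  rewrite /memU; case: insubP => [j lt E|nlt] /=; first by rewrite inE -E ltn_ord.
  by rewrite (negbTE nlt).
have Fc1 : 0 < c -> F c.-1 < c by case/orP: Hc => [/eqP ->|].
have usE : usL U = opl F c.
  apply: eq_in_filter => i; rewrite mem_iota add0n /= => ic.
  rewrite memUE; case: (ltnP i c.-1) => h //=.
  have ie : i = c.-1 by lia.
  by rewrite ie leqNgt Fc1 //; lia.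
have xsE : xsL U = pre F c.
  apply: eq_in_filter => i; rewrite mem_iota add0n /= => ic.
  rewrite memUE; case: (ltnP i c.-1) => h /=; first by rewrite ltnNge.
  have ie : i = c.-1 by lia.
  by rewrite ie Fc1 //; lia.
have vsE : vsL V = opr N F c.
  apply: eq_in_filter => i; rewrite mem_iota => /andP[ci iN].
  by rewrite memVE subnKC // (_ : i - c < N - c) //; lia.
have ysE : ysL V = suf N F c.
  apply: eq_in_filter => i; rewrite mem_iota => /andP[ci iN].
  by rewrite memVE subnKC // (_ : i - c < N - c) //= -?leqNgt; lia.
have HU : #|U| = k.
  by rewrite -(count_memU_ge (M' := c)) ?leq_pred // -size_filter -/(usL U) usE.
have oo := size_opl_opr HF cN.
have HV : #|V| = k.
  by rewrite -(count_memU_shift c) -size_filter -/(vsL V) vsE -oo.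
have szp : size (pre F c) = l.*2.
  have := size_pre_opl F c; rewrite szo; lia.
have szs : size (suf N F c) = m.*2.
  have := size_suf_opr N F c; rewrite -oo szo Hn; lia.
have Hmu := match_pre Hf cN szp.
have Hnu := match_suf Hf cN szs.
set mu := resm l f (pre F c) in Hmu HmuP.
set nu := resm m f (suf N F c) in Hnu HnuQ.
have oN x : x \in opl F c -> x < N by rewrite mem_opl => /andP[h _]; lia.
have rN x : x \in opr N F c -> x < N by rewrite mem_opr // => /and3P[].
have Fo x : x \in opl F c -> F x \in opr N F c.
  move=> xo; move: (xo); rewrite mem_opl mem_opr // => /andP[xc cF].
  by have [FN -> _] := HF x (oN _ xo); rewrite cF FN xc.
have Fr x : x \in opr N F c -> F x \in opl F c.
  move=> xo; move: (xo); rewrite mem_opl mem_opr // => /and3P[cx xN Fc].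
  by have [FN -> _] := HF x xN; rewrite Fc cx.
pose h (i : 'I_k) : 'I_k := insubd i (index (F (nth 0 (opl F c) i)) (opr N F c)).
have hE (i : 'I_k) : val (h i) = index (F (nth 0 (opl F c) i)) (opr N F c).
  have hl : index (F (nth 0 (opl F c) i)) (opr N F c) < k.
    have h1 : index (F (nth 0 (opl F c) i)) (opr N F c) < size (opr N F c).
      by rewrite index_mem Fo // mem_nth // szo.
    lia.
  by rewrite val_insubd hl.
have uo := sorted_uniq_ltn (sorted_opl F c).
have ur := sorted_uniq_ltn (sorted_opr N F c).
have h_inj : injective h.
  move=> i j E; have := congr1 val E; rewrite !hE => E2.
  have Ei : nth 0 (opl F c) i \in opl F c by rewrite mem_nth // szo.
  have Ej : nth 0 (opl F c) j \in opl F c by rewrite mem_nth // szo.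
  have E3 : F (nth 0 (opl F c) i) = F (nth 0 (opl F c) j).
    by rewrite -(nth_index 0 (Fo _ Ei)) E2 nth_index // Fo.
  have E4 := F_inj_in HF oN Ei Ej E3.
  apply: val_inj; move/eqP: E4; rewrite nth_uniq ?szo //; by move/eqP.
pose p := perm h_inj.
have pfE i : i < k -> pf p i = index (F (nth 0 (opl F c) i)) (opr N F c).
  by move=> ik; rewrite (_ : i = Ordinal ik) // pf_val permE hE.
exists U, V, p, mu, nu; split => //.
apply: natf_inj => x xN.
rewrite (natf_bf Hn p HU HV Hmu Hnu xN).
case: (cases Hn HU HV Hmu Hnu xN) => hx.
- rewrite (G_xs V p mu nu hx).
  move: hx; rewrite xsE => hx.
  have il : index x (pre F c) < l.*2 by rewrite -[X in _ < X]szp index_mem.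
  have E1 := natf_resm szp (fun y => @pre_closed N F HF c y cN) il.
  by rewrite E1 /res nth_index // nth_index // (pre_closed HF cN).
- rewrite (G_us V p mu nu hx).
  move: hx; rewrite usE vsE => hx.
  have il : index x (opl F c) < k by rewrite -[X in _ < X]szo index_mem.
  by rewrite pfE // nth_index // nth_index // Fo.
- rewrite (G_vs Hn p HU HV Hmu Hnu hx).
  move: hx; rewrite usE vsE => hx.
  have il : index (F x) (opl F c) < k by rewrite -[X in _ < X]szo index_mem Fr.
  have E : index x (opr N F c) = pf p (index (F x) (opl F c)).
    have [_ FFx _] := HF x (rN _ hx).
    by rewrite pfE // nth_index ?Fr // FFx.
  by rewrite E pfK // nth_index // Fr.
- rewrite (G_ys Hn p HU HV Hmu Hnu hx).
  move: hx; rewrite ysE => hx.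
  have il : index x (suf N F c) < m.*2 by rewrite -[X in _ < X]szs index_mem.
  have E1 := natf_resm szs (fun y => @suf_closed N F HF c y cN) il.
  by rewrite E1 /res nth_index // nth_index // (suf_closed HF cN).
Qed.

End Surj.

Lemma count_S l k m n (P : {set mfun l}) (Q : {set mfun m}) :
  n = l + k + m -> (forall mu, mu \in P -> is_matching mu) ->
  (forall nu, nu \in Q -> is_matching nu) ->
  #|@Sgen n l k m P Q| =
    'C((l.*2 + k).-1, k) * 'C(n.*2 - (l.*2 + k), k) * k`! * #|P| * #|Q|.
Proof.
move=> Hn HP HQ.
pose c := l.*2 + k.
pose D := setX (setX (setX (setX [set A : {set 'I_c.-1} | #|A| == k]
                                 [set B : {set 'I_(n.*2 - c)} | #|B| == k])
                           [set: {perm 'I_k}]) P) Q.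
pose build (d : ({set 'I_c.-1} * {set 'I_(n.*2 - c)} * {perm 'I_k} * mfun l * mfun m)%type)
  := @bf l k m n d.1.1.1.1 d.1.1.1.2 d.1.1.2 d.1.2 d.2.
have cardD : #|D| = 'C(c.-1, k) * 'C(n.*2 - c, k) * k`! * #|P| * #|Q|.
  by rewrite !cardsX !card_draws !card_ord cardsT card_Sn.
have SE : @Sgen n l k m P Q = build @: D.
  apply/setP => f; apply/idP/imsetP.
    move=> /(surj Hn) [U [V [p [mu [nu [HU HV HmuP HnuQ E]]]]]].
    exists ((((U, V), p), mu), nu); last by rewrite /build /= E.
    by rewrite !inE /= HU HV HmuP HnuQ !eqxx.
  move=> [[[[[U V] p] mu] nu]]; rewrite !inE /= => /andP[/andP[/andP[/andP[/eqP HU /eqP HV] _] HmuP] HnuQ] ->.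
  rewrite /build /=.
  by have := (bf_in Hn p HU HV (HP _ HmuP) (HQ _ HnuQ) HmuP HnuQ); rewrite inE.
rewrite SE card_in_imset ?cardD //.
move=> [[[[U1 V1] p1] mu1] nu1] [[[[U2 V2] p2] mu2] nu2].
rewrite !inE /= => /andP[/andP[/andP[/andP[/eqP HU1 /eqP HV1] _] HmuP1] HnuQ1].
move=> /andP[/andP[/andP[/andP[/eqP HU2 /eqP HV2] _] HmuP2] HnuQ2].
rewrite /build /= => E.
have Hmu1 := HP _ HmuP1; have Hmu2 := HP _ HmuP2.
have Hnu1 := HQ _ HnuQ1; have Hnu2 := HQ _ HnuQ2.
have Emu : mu1 = mu2.
  by rewrite -(resm_pre_bf Hn p1 HU1 HV1 Hmu1 Hnu1) E (resm_pre_bf Hn p2 HU2 HV2 Hmu2 Hnu2).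
have Enu : nu1 = nu2.
  by rewrite -(resm_suf_bf Hn p1 HU1 HV1 Hmu1 Hnu1) E (resm_suf_bf Hn p2 HU2 HV2 Hmu2 Hnu2).
have Eus : usL U1 = usL U2.
  by rewrite -(opl_bf Hn p1 HU1 HV1 Hmu1 Hnu1) E (opl_bf Hn p2 HU2 HV2 Hmu2 Hnu2).
have Evs : vsL V1 = vsL V2.
  by rewrite -(opr_bf Hn p1 HU1 HV1 Hmu1 Hnu1) E (opr_bf Hn p2 HU2 HV2 Hmu2 Hnu2).
have EU : U1 = U2.
  apply/setP => j; rewrite -!memU_val.
  have := congr1 (fun s => val j \in s) Eus; rewrite /= !mem_filter mem_iota /=.
  have jc : j < l.*2 + k := leq_trans (ltn_ord j) (leq_pred _).
  by rewrite add0n jc !andbT.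
have EV : V1 = V2.
  apply/setP => j; rewrite -!memU_val.
  have := congr1 (fun s => c + val j \in s) Evs; rewrite /= !mem_filter mem_iota /=.
  have jc : c + j < c + (n.*2 - c) by rewrite ltn_add2l ltn_ord.
  by rewrite addKn leq_addr jc !andbT.
subst U2 V2 mu2 nu2.
have Ep : p1 = p2.
  apply/permP => i; apply: val_inj.
  change (nat_of_ord (p1 i) = nat_of_ord (p2 i)).
  by rewrite -!pf_val (pf_bf Hn p1 HU1 HV1 Hmu1 Hnu1 (ltn_ord i))
             (pf_bf Hn p2 HU1 HV1 Hmu1 Hnu1 (ltn_ord i)) E.
by rewrite Ep.
Qed.

Theorem proposition2 (a b n : nat) (s : mfun a) (t : mfun b) :
  is_matching s -> is_matching t -> a <= n ->
  #|Mset n (juxt s t)| =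
    #|Mset n s| +
    \sum_(a <= l < n.+1) \sum_(k < (n - l).+1)
      'C(l.*2 + k - 1, k) * 'C(n.*2 - l.*2 - k, k) * k`! *
      #|mu l s| * #|Mset (n - l - k) t|.
Proof.
move=> Hs Ht _.
have split : #|Mset n (juxt s t)| = #|Mset n s| + #|Aset n s t|.
  rewrite -(cardsID [set f : mfun n | contains s f] (Mset n (juxt s t))) addnC.
  congr (_ + _); apply: eq_card => f; rewrite !inE.
    case: (boolP (is_matching f)) => //= Hf; case: (boolP (contains s f)) => //= Hc.
    by apply/negP => /(cont_juxt f Hs Ht) [c [Hp _]]; move/negP: Hc; apply;
       apply/cont_embP; apply: embP_mono Hp.
  by case: (is_matching f); case: (contains s f); case: (contains (juxt s t) f).
rewrite split cardA //; congr (_ + _).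
apply: eq_big_nat => l /andP[al ln]; apply: eq_bigr => k _.
have lk : l + k <= n.
  by have := ltn_ord k; lia.
rewrite /SS count_S; first last.
- by move=> nu; rewrite inE => /andP[].
- by move=> mu'; rewrite inE => /and3P[].
- lia.
by rewrite subn1 subnDA.
Qed.
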